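(* Let $p\geq1$ and $A>0$. Let $\rho(\tau)$ be the covariance function of a centered stationary random process, and suppose $\rho$ is continuous and $\rho(T)\to0$ as $T\to\infty$. For $T>0$ and $\tau\in[0,A]$ put \[ \psi(T,\tau)=\frac{2}{T^2}\int_0^{T}(T-u)\bigl(\rho^2(u)+\rho(u+\tau)\rho(u-\tau)\bigr)\,du, \qquad C_p=C_p(T)=\int_0^{A}\bigl(\psi(T,\tau)\bigr)^{p/2}\,d\tau . \] Then $C_p\to0$ as $T\to\infty$.
   Context: The covariance function $\rho$ of a stationary process is an even function defined on all of $\mathbb{R}$. *)

(* Defs.v *)
From HB Require Import structures.
From mathcomp Require Import all_boot all_order all_algebra.
From mathcomp Require Import all_classical all_reals all_analysis.
Set Implicit Arguments. Unset Strict Implicit. Unset Printing Implicit Defensive.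
Import Order.TTheory GRing.Theory Num.Theory.
Import numFieldNormedType.Exports.
Local Open Scope classical_set_scope.
Local Open Scope ring_scope.

Definition centered_stationary_cov (R : realType) (d : measure_display)
    (Omega : measurableType d) (P : probability Omega R)
    (X : R -> Omega -> R) (rho : R -> R) : Prop :=
  [/\ (forall t, X t \in Lfun P 2%:E),
      (forall t, ('E_P[X t] = 0)%E) &
      (forall s t, covariance P (X (s + t)) (X s) = (rho t)%:E)].

Definition psi (R : realType) (rho : R -> R) (T tau : R) : R :=
  2 / T ^+ 2 * Rintegral (@lebesgue_measure R) `[0, T]
    (fun u => (T - u) * (rho u ^+ 2 + rho (u + tau) * rho (u - tau))).

Definition Cp (R : realType) (rho : R -> R) (p A T : R) : R :=
  Rintegral (@lebesgue_measure R) `[0, A]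
    (fun tau => powR (psi rho T tau) (p / 2)).

(* Main.v *)
Require Import Defs.
From HB Require Import structures.
From mathcomp Require Import all_boot all_order all_algebra.
From mathcomp Require Import all_classical all_reals all_analysis.
From mathcomp Require Import ring lra.
Import Order.TTheory GRing.Theory Num.Theory.
Import numFieldNormedType.Exports.
Local Open Scope classical_set_scope.
Local Open Scope ring_scope.
Section comb.
Context {R : realType}.

Lemma sum_rev (g : R -> R) (h : R) n :
  \sum_(j < n) g ((n%:R - j%:R) * h) = \sum_(k < n) g (k.+1%:R * h).
Proof.
rewrite (reindex_inj rev_ord_inj) /=; apply: eq_bigr => j _.
by rewrite natrB // opprB addrCA subrr addr0.
Qed.

Lemma double_sum (g : R -> R) (h : R) : (forall x, g (- x) = g x) ->
  forall n, \sum_(i < n) \sum_(j < n) g ((i%:R - j%:R) * h) + n%:R * g 0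
   = 2 * \sum_(k < n) (n%:R - k%:R) * g (k%:R * h).
Proof.
move=> ge; elim => [|n IH]; first by rewrite !big_ord0 mul0r addr0 mulr0.
rewrite big_ord_recr /=.
under eq_bigr do rewrite big_ord_recr /=.
rewrite big_split /=.
have E1 : \sum_(i < n) g ((i%:R - n%:R) * h) = \sum_(j < n) g ((n%:R - j%:R) * h).
  by apply: eq_bigr => i _; rewrite -ge; congr g; ring.
rewrite E1 sum_rev big_ord_recr /= subrr mul0r.
have E2 : \sum_(i < n) (n.+1%:R - (widen_ord (leqnSn n) i)%:R) * g (i%:R * h)
   = \sum_(i < n) (n%:R - i%:R) * g (i%:R * h) + \sum_(i < n) g (i%:R * h).
  by rewrite -big_split; apply: eq_bigr => i _ /=; rewrite -addn1 natrD; ring.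
rewrite sum_rev (big_ord_recr n (fun k : 'I_n.+1 => (n.+1%:R - k%:R) * g (k%:R * h))) /= E2.
have E3 : \sum_(i < n) g (i%:R * h) + g (n%:R * h) = g 0 + \sum_(k < n) g (k.+1%:R * h).
  by rewrite -(big_ord_recr n (fun i : 'I_n.+1 => g (i%:R * h))) big_ord_recl /= mul0r.
have : 2 * (\sum_(i < n) (n%:R - i%:R) * g (i%:R * h) + \sum_(i < n) g (i%:R * h) +
   (n.+1%:R - n%:R) * g (n%:R * h)) = 2 * \sum_(i < n) (n%:R - i%:R) * g (i%:R * h)
   + 2 * (\sum_(i < n) g (i%:R * h) + g (n%:R * h)).
  by rewrite -addn1 natrD; ring.
move=> ->; rewrite E3 -IH -addn1 natrD; ring.
Qed.
End comb.
Section ana.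
Context {R : realType}.
Lemma unif_cont (F : R -> R) (a b : R) : continuous F ->
  forall e, 0 < e -> exists2 dl, 0 < dl &
    forall x y, a <= x <= b -> `|x - y| < dl -> `|F x - F y| < e.
Proof.
move=> Fc e e0.
have cover : forall x, `[a, b]%classic x -> \forall x' \near x & i \near \oo,
    (forall y, `|x' - y| < i.+1%:R^-1 -> `|F x' - F y| < e).
  move=> x _.
  have /cvgrPdist_lt /(_ (e/2)) := Fc x.
  move=> /(_ (divr_gt0 e0 (ltr0n _ 2))) /nbhs_ballP [r /= r0 hr].
  have [N hN] := @ltr_add_invr R 0 (r/2) (divr_gt0 r0 (ltr0n _ 2)).
  rewrite add0r in hN.
  exists (ball x (r/2), [set n | (N <= n)%N]).
    split => /=; first by apply: nbhsx_ballx; exact: divr_gt0.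
    by exists N.
  move=> [z n] [/= hz hn] y hy.
  have hz' : `|x - z| < r / 2 by move: hz; rewrite /ball /=.
  have hnN : n.+1%:R^-1 <= N.+1%:R^-1 :> R.
    by rewrite lef_pV2 ?posrE ?ltr0n // ler_nat ltnS.
  have hxy : `|x - y| < r.
    have := ler_distD z x y; set u := n.+1%:R^-1 in hy hnN *; set v := N.+1%:R^-1 in hN hnN *; lra.
  have h1 := hr y hxy.
  have h2 : `|F x - F z| < e / 2 by apply: hr; rewrite /ball /=; lra.
  have h3 := ler_distD (F x) (F z) (F y).
  rewrite distrC in h2; lra.
have := (compact_near_coveringP `[a, b]%classic).1 (@segment_compact R a b) nat \oo
  (fun n x => forall y, `|x - y| < n.+1%:R^-1 -> `|F x - F y| < e) _ cover.
case=> N _ HN.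
exists N.+1%:R^-1; first by rewrite invr_gt0 ltr0n.
move=> x y hx; exact: (HN N (leqnn N) x hx y).
Qed.

Notation mu := (@lebesgue_measure R).

Lemma cont_int (F : R -> R) (a b : R) : continuous F ->
  mu.-integrable `[a, b] (EFin \o F).
Proof.
move=> Fc; apply: continuous_compact_integrable; first exact: segment_compact.
exact: continuous_subspaceT.
Qed.

Lemma Phi_diff (F : R -> R) (a b : R) : continuous F -> 0 <= a -> a <= b ->
  Rintegral mu `[0, b] F - Rintegral mu `[0, a] F = Rintegral mu `[a, b] F.
Proof.
move=> Fc a0 ab.
rewrite (@Rintegral_itvB R F (BLeft 0) (BRight b) a) ?bnd_simp //; last exact: cont_int.
rewrite Rintegral_itv_obnd_cbnd //.
apply: (@integrableS _ _ _ mu `[a, b]%classic) => //; last exact: cont_int.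
by apply: subset_itvr; rewrite bnd_simp.
Qed.

Lemma int_lb (F : R -> R) (a b c : R) : continuous F -> a <= b ->
  (forall x, a <= x <= b -> c <= F x) -> c * (b - a) <= Rintegral mu `[a, b] F.
Proof.
move=> Fc ab hc.
have -> : c * (b - a) = Rintegral mu `[a, b] (fun _ => c).
  rewrite Rintegral_cst //= lebesgue_measure_itv /= lte_fin.
  move: ab; rewrite le_eqVlt => /predU1P [-> | ab]; first by rewrite ltxx /= subrr mulr0.
  by rewrite ab.
apply: le_Rintegral => //.
- by apply: cont_int => x; exact: cvg_cst.
- exact: cont_int.
Qed.

Lemma riemann_ge0 (F : R -> R) (T0 : R) : continuous F -> 0 < T0 ->
  (forall n, (0 < n)%N -> 0 <= \sum_(k < n) F (k%:R * (T0 / n%:R))) ->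
  0 <= Rintegral mu `[0, T0] F.
Proof.
move=> Fc T0p hS.
apply/ler_addgt0Pr => e e0.
have eT : 0 < e / T0 by exact: divr_gt0.
have [dl dl0 hdl] := unif_cont F 0 T0 Fc (e / T0) eT.
have [k hk] := @ltr_add_invr R 0 (dl / T0) (divr_gt0 dl0 T0p).
rewrite add0r in hk.
set n := k.+1.
have n0 : (0 < n%:R :> R) by rewrite ltr0n.
set h := T0 / n%:R.
have h0 : 0 < h by exact: divr_gt0.
have hdl' : h < dl.
  rewrite -(ltr_pM2l T0p) mulrCA divff ?gt_eqF // mulr1 in hk.
  exact: hk.
have nh : n%:R * h = T0 by rewrite /h mulrCA divff ?gt_eqF // mulr1.
pose Phi x := Rintegral mu `[0, x] F.
have Phi0 : Phi 0 = 0 by rewrite /Phi set_itv1 Rintegral_set1.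
have -> : Rintegral mu `[0, T0] F = \sum_(i < n) (Phi (i.+1%:R * h) - Phi (i%:R * h)).
  rewrite -(big_mkord xpredT (fun i => Phi (i.+1%:R * h) - Phi (i%:R * h))).
  rewrite (telescope_sumr (fun i => Phi (i%:R * h))) // mul0r Phi0 subr0 nh //.
have key : forall i : 'I_n, (F (i%:R * h) - e / T0) * h
    <= Phi (i.+1%:R * h) - Phi (i%:R * h).
  move=> i.
  have hi : i%:R * h <= T0.
    rewrite -nh ler_pM2r // ler_nat; exact: ltnW.
  have E : i.+1%:R * h - i%:R * h = h by rewrite -addn1 natrD; ring.
  have ab : i%:R * h <= i.+1%:R * h by rewrite -subr_ge0 E ltW.
  rewrite /Phi Phi_diff //; last by rewrite mulr_ge0 // ltW.
  have := @int_lb F (i%:R * h) (i.+1%:R * h) (F (i%:R * h) - e / T0) Fc ab.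
  rewrite E; apply => x /andP [x1 x2].
  have ih0 : 0 <= i%:R * h by rewrite mulr_ge0 // ltW.
  have : `|F (i%:R * h) - F x| < e / T0.
    apply: hdl; first by rewrite ih0 hi.
    rewrite ler0_norm ?subr_le0 //.
    have : i.+1%:R * h - i%:R * h < dl by rewrite E.
    lra.
  have := ler_norm (F (i%:R * h) - F x).
  set u := e / T0; lra.
have hSS : \sum_(i < n) (F (i%:R * h) - e / T0) * h
    <= \sum_(i < n) (Phi (i.+1%:R * h) - Phi (i%:R * h)).
  by apply: ler_sum => i _; exact: key.
apply: le_trans (lerD hSS (lexx e)).
under eq_bigr do rewrite mulrBl.
rewrite sumrB sumr_const card_ord -mulr_suml -mulr_natr.
have -> : e / T0 * h * n%:R = e by rewrite -mulrA [h * _]mulrC nh divfK // gt_eqF.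
rewrite subrK; apply: mulr_ge0; last exact: ltW.
exact: hS.
Qed.

Lemma int_ub (F : R -> R) (a b c : R) : continuous F -> a <= b ->
  (forall x, a <= x <= b -> F x <= c) -> Rintegral mu `[a, b] F <= c * (b - a).
Proof.
move=> Fc ab hc.
have -> : c * (b - a) = Rintegral mu `[a, b] (fun _ => c).
  rewrite Rintegral_cst //= lebesgue_measure_itv /= lte_fin.
  move: ab; rewrite le_eqVlt => /predU1P [-> | ab]; first by rewrite ltxx /= subrr mulr0.
  by rewrite ab.
apply: le_Rintegral => //.
- exact: cont_int.
- by apply: cont_int => x; exact: cvg_cst.
Qed.

Lemma le_int_nm (D : set R) (f g : R -> \bar R) :
  (forall x, D x -> (0 <= f x)%E) -> (forall x, D x -> (f x <= g x)%E) ->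
  (\int[mu]_(x in D) f x <= \int[mu]_(x in D) g x)%E.
Proof.
move=> f0 fg.
have g0 : forall x, D x -> (0 <= g x)%E by move=> x Dx; exact: le_trans (f0 x Dx) (fg x Dx).
rewrite !ge0_integralE //.
apply: ge_ereal_sup => _ [h hh <-]; apply: ereal_sup_ubound; exists h => //= x.
apply: le_trans (hh x) _; rewrite /patch; case: ifP => // /set_mem Dx.
exact: fg.
Qed.

Lemma Rint_le_cst (A k : R) (f : R -> R) : 0 <= A ->
  (forall x, 0 <= x <= A -> 0 <= f x <= k) -> 0 <= Rintegral mu `[0, A] f <= k * A.
Proof.
move=> A0 hf; apply/andP; split.
  by apply: Rintegral_ge0 => x; rewrite /= in_itv /= => /hf /andP [].
have k0 : 0 <= k.
  have /andP [h1 h2] : 0 <= f 0 <= k by apply: hf; rewrite lexx A0.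
  exact: le_trans h1 h2.
have hle : (\int[mu]_(x in `[0%R, A]) (f x)%:E <= \int[mu]_(x in `[0%R, A]) k%:E)%E.
  apply: le_int_nm => x; rewrite /= in_itv /= => /hf /andP [h1 h2]; by rewrite lee_fin.
have hk : (\int[mu]_(x in `[0%R, A]) k%:E = (k * A)%:E)%E.
  rewrite integral_cst //= lebesgue_measure_itv /= lte_fin.
  move: A0; rewrite le_eqVlt => /predU1P [<- | A0]; first by rewrite ltxx mule0 mulr0.
  by rewrite A0 /= oppr0 adde0 -EFinM.
have h0 : (0 <= \int[mu]_(x in `[0%R, A]) (f x)%:E)%E.
  by apply: integral_ge0 => x; rewrite /= in_itv /= => /hf /andP [h1 _]; rewrite lee_fin.
rewrite hk in hle.
rewrite /Rintegral -lee_fin fineK //.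
by rewrite ge0_fin_numE // (le_lt_trans hle) // ltry.
Qed.
End ana.
Section cont.
Context {R : realType}.
Lemma cont_shift {rho : R -> R} : continuous rho -> forall c, continuous (fun u => rho (u + c)).
Proof.
move=> rc c x; apply: continuous_comp; last exact: rc.
by apply: cvgD; [exact: cvg_id | exact: cvg_cst].
Qed.

Lemma cont_F (rho : R -> R) (T0 tau : R) : continuous rho ->
  continuous (fun u => (T0 - u) * (rho u ^+ 2 + rho (u + tau) * rho (u - tau))).
Proof.
move=> rc.
have -> : (fun u => (T0 - u) * (rho u ^+ 2 + rho (u + tau) * rho (u - tau))) =
  (fun u => (T0 - u) * (rho u * rho u + rho (u + tau) * rho (u + - tau))).
  by apply/funext => u; rewrite expr2.
move=> x.
have h1 := cont_shift rc tau x.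
have h2 := cont_shift rc (- tau) x.
apply: cvgM; first by apply: cvgB; [exact: cvg_cst | exact: cvg_id].
apply: cvgD; first by apply: cvgM; exact: (rc x).
by apply: cvgM.
Qed.
End cont.
Section prob.
Context d (T : measurableType d) (R : realType) (P : probability T R).

Definition ee (f : T -> R) : R := fine ('E_P[f])%E.

Lemma L1_of_L2 {f} : f \in Lfun P 2%:E -> f \in Lfun P 1.
Proof. move=> h; apply: (Lfun_subset12 _ h); exact: fin_num_measure. Qed.

Lemma L1_mul {f g} : f \in Lfun P 2%:E -> g \in Lfun P 2%:E ->
  (fun w => f w * g w) \in Lfun P 1.
Proof. exact: Lfun2_mul_Lfun1. Qed.

Lemma L1_sum (I : finType) (f : I -> T -> R) : (forall i, f i \in Lfun P 1) ->
  (fun w => \sum_i f i w) \in Lfun P 1.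
Proof.
move=> hf.
have -> : (fun w => \sum_i f i w) = \sum_i f i.
  by apply/funext => w; rewrite fct_sumE.
by apply: rpred_sum => i _; exact: hf.
Qed.

Lemma L1_scale c {f} : f \in Lfun P 1 -> (fun w => c * f w) \in Lfun P 1.
Proof.
move=> hf; have := @Lfun_scale _ _ _ P f c 1 (lexx _) hf.
by have -> : (fun w => c * f w) = c \o* f by apply/funext => w /=; rewrite mulrC.
Qed.

Lemma ee_sum (I : finType) (f : I -> T -> R) : (forall i, f i \in Lfun P 1) ->
  ee (fun w => \sum_i f i w) = \sum_i ee (f i).
Proof.
move=> hf; rewrite /ee.
have -> : (fun w => \sum_i f i w) = \sum_(g <- map f (enum I)) g.
  by apply/funext => w; rewrite fct_sumE big_map big_enum.
rewrite expectation_sum; last by move=> g /mapP [i _ ->].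
rewrite big_map big_enum -sum_fine //= => i _; exact: expectation_fin_num.
Qed.

Lemma ee_scale c f : f \in Lfun P 1 -> ee (fun w => c * f w) = c * ee f.
Proof.
move=> hf; rewrite /ee.
have -> : (fun w => c * f w) = c \o* f by apply/funext => w /=; rewrite mulrC.
rewrite expectationZl // -(fineK (expectation_fin_num hf)) //.
Qed.

Lemma ee_ge0 f : (forall w, 0 <= f w) -> 0 <= ee f.
Proof. by move=> h; apply: fine_ge0; exact: expectation_ge0. Qed.

Lemma gram (I : finType) (u : I -> T -> R) (c : I -> R) :
  (forall i, u i \in Lfun P 2%:E) ->
  0 <= \sum_i \sum_j c i * c j * ee (fun w => u i w * u j w).
Proof.
move=> hu.
have : 0 <= ee (fun w => (\sum_i c i * u i w) ^+ 2).
  by apply: ee_ge0 => w; exact: sqr_ge0.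
have -> : (fun w => (\sum_i c i * u i w) ^+ 2) =
    fun w => \sum_i (\sum_j c i * c j * (u i w * u j w)).
  apply/funext => w; rewrite expr2 mulr_suml; apply: eq_bigr => i _.
  rewrite mulr_sumr; apply: eq_bigr => j _; ring.
rewrite ee_sum; last first.
  move=> i; apply: L1_sum => j; exact: (L1_scale (c i * c j) (L1_mul (hu i) (hu j))).
congr (_ <= _); apply: eq_bigr => i _.
rewrite ee_sum; last first.
  move=> j; exact: (L1_scale (c i * c j) (L1_mul (hu i) (hu j))).
by apply: eq_bigr => j _; rewrite ee_scale //; exact: L1_mul.
Qed.

Lemma schur (I : finType) (u v : I -> T -> R) :
  (forall i, u i \in Lfun P 2%:E) -> (forall i, v i \in Lfun P 2%:E) ->
  0 <= \sum_i \sum_j ee (fun w => u i w * u j w) * ee (fun w => v i w * v j w).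
Proof.
move=> hu hv.
have -> : \sum_i \sum_j ee (fun w => u i w * u j w) * ee (fun w => v i w * v j w)
  = ee (fun w => \sum_i \sum_j ee (fun w => v i w * v j w) * (u i w * u j w)).
  rewrite ee_sum; last first.
    move=> i; apply: L1_sum => j; exact: (L1_scale _ (L1_mul (hu i) (hu j))).
  apply: eq_bigr => i _; rewrite ee_sum; last first.
    move=> j; exact: (L1_scale _ (L1_mul (hu i) (hu j))).
  apply: eq_bigr => j _; rewrite ee_scale; [exact: mulrC | exact: L1_mul].
apply: ee_ge0 => w.
have := @gram I v (fun i => u i w) hv.
by congr (_ <= _); apply: eq_bigr => i _; apply: eq_bigr => j _; ring.
Qed.

Lemma ee_X {X : R -> T -> R} {rho} : centered_stationary_cov P X rho ->
  forall s t, ee (fun w => X s w * X t w) = rho (s - t).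
Proof.
case=> hL2 hE hC s t.
have := hC t (s - t); rewrite (addrC t (s - t)) subrK.
rewrite covarianceE; [ | exact: L1_of_L2 | exact: L1_of_L2 | exact: L1_mul].
rewrite !hE mule0 sube0 => h.
have -> : (fun w => X s w * X t w) = (X s * X t)%R by [].
by rewrite /ee h.
Qed.

Lemma rho_even {X : R -> T -> R} {rho} : centered_stationary_cov P X rho ->
  forall t, rho (- t) = rho t.
Proof.
case=> hL2 hE hC t.
have := hC t (- t); rewrite addrN covarianceC.
have := hC 0 t; rewrite add0r => -> [] //.
Qed.

Lemma schur_rho {X : R -> T -> R} {rho} : centered_stationary_cov P X rho ->
  forall (I : finType) (s s' : I -> R),
  0 <= \sum_i \sum_j rho (s i - s j) * rho (s' i - s' j).
Proof.
move=> hX I s s'.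
have := @schur I (fun i => X (s i)) (fun i => X (s' i)).
case: (hX) => hL2 _ _.
move=> /(_ (fun i => hL2 _) (fun i => hL2 _)).
by congr (_ <= _); apply: eq_bigr => i _; apply: eq_bigr => j _; rewrite !(ee_X (X:=X) hX).
Qed.

Lemma sum_boolI n (G : bool * 'I_n -> R) :
  \sum_x G x = \sum_i G (true, i) + \sum_i G (false, i).
Proof.
have -> : \sum_x G x = \sum_b \sum_i G (b, i).
  by rewrite pair_big; apply: eq_big => // -[b i].
by rewrite big_bool.
Qed.

Lemma grid_psd {X : R -> T -> R} {rho} : centered_stationary_cov P X rho ->
  forall (h tau : R) n, 0 <= \sum_(i < n) \sum_(j < n)
    (rho ((i%:R - j%:R) * h) ^+ 2 +
     rho ((i%:R - j%:R) * h + tau) * rho ((i%:R - j%:R) * h - tau)).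
Proof.
move=> hX h tau n.
have := schur_rho hX (bool * 'I_n)%type (fun x : bool * 'I_n => x.2%:R * h + (if x.1 then tau else 0))
   (fun x : bool * 'I_n => x.2%:R * h + (if x.1 then 0 else tau)).
under eq_bigr do rewrite sum_boolI.
rewrite sum_boolI /= -!big_split /=.
move=> H; rewrite -(@pmulr_rge0 _ 2) //; apply: le_trans H _.
rewrite le_eqVlt; apply/orP; left; apply/eqP.
rewrite mulr_sumr; apply: eq_bigr => i _; rewrite -!big_split mulr_sumr.
apply: eq_bigr => j _ /=; rewrite !addr0.
have -> : i%:R * h + tau - (j%:R * h + tau) = (i%:R - j%:R) * h by ring.
have -> : i%:R * h - j%:R * h = (i%:R - j%:R) * h by ring.
have -> : i%:R * h + tau - j%:R * h = (i%:R - j%:R) * h + tau by ring.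
have -> : i%:R * h - (j%:R * h + tau) = (i%:R - j%:R) * h - tau by ring.
ring.
Qed.
End prob.

Section final.
Context d (T : measurableType d) (R : realType) (P : probability T R)
  (X : R -> T -> R) (rho : R -> R).
Hypothesis hX : centered_stationary_cov P X rho.
Hypothesis rc : continuous rho.
Local Notation mu := (@lebesgue_measure R).

Lemma psi_ge0 (T0 tau : R) : 0 < T0 -> 0 <= psi rho T0 tau.
Proof.
move=> T0p; rewrite /psi; apply: mulr_ge0.
  by apply: divr_ge0 => //; exact: sqr_ge0.
apply: riemann_ge0 => //; first exact: cont_F.
move=> n n0.
set h := T0 / n%:R.
have re : forall t, rho (- t) = rho t := @rho_even _ _ _ P X rho hX.
pose g u := rho u ^+ 2 + rho (u + tau) * rho (u - tau).
have geven : forall x, g (- x) = g x.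
  move=> x; rewrite /g re -opprD re.
  rewrite (_ : - x + tau = - (x - tau)); last by rewrite opprB addrC.
  by rewrite re mulrC.
have E := double_sum g h geven n.
have S0 := @grid_psd _ _ _ P X rho hX h tau n.
have g0 : 0 <= g 0.
  by rewrite /g add0r sub0r re -expr2 addr_ge0 // sqr_ge0.
have nh : n%:R * h = T0 by rewrite /h mulrCA divff ?mulr1 // pnatr_eq0 -lt0n.
have -> : \sum_(k < n) (T0 - k%:R * h) * (rho (k%:R * h) ^+ 2 +
     rho (k%:R * h + tau) * rho (k%:R * h - tau))
   = h * \sum_(k < n) (n%:R - k%:R) * g (k%:R * h).
  rewrite mulr_sumr; apply: eq_bigr => k _; rewrite /g -nh; ring.
apply: mulr_ge0; first by apply: divr_ge0; [exact: ltW | exact: ler0n].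
rewrite -(@pmulr_rge0 _ 2) // -E; apply: addr_ge0 => //.
by apply: mulr_ge0 => //; exact: ler0n.
Qed.

Lemma g_ub (B x y z : R) : `|x| <= B -> `|y| <= B -> `|z| <= B ->
  x ^+ 2 + y * z <= 2 * B ^+ 2.
Proof.
rewrite !ler_norml => /andP [x1 x2] /andP [y1 y2] /andP [z1 z2].
rewrite !expr2; nra.
Qed.

Lemma psi_ub (A : R) : 0 < A -> rho x @[x --> +oo] --> 0 ->
  forall e, 0 < e -> exists T1, forall T0, T1 < T0 ->
    forall tau, 0 <= tau <= A -> psi rho T0 tau <= e.
Proof.
move=> A0 hlim e e0.
pose eta := Num.min 1 (e / 8).
have eta0 : 0 < eta by rewrite lt_min ltr01 divr_gt0.
have eta1 : eta <= 1 by rewrite ge_min lexx.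
have eta8 : eta <= e / 8 by rewrite ge_min lexx orbT.
move/cvgrPdist_le : hlim => /(_ eta eta0) [M [Mr HM]].
have hE : forall v, M < v -> `|rho v| <= eta.
  by move=> v /HM; rewrite sub0r normrN.
pose c := `|M| + A + 1.
have c0 : 0 < c by rewrite /c; have := normr_ge0 M; lra.
have cA : - A <= c + A by rewrite /c; have := normr_ge0 M; lra.
have [m _ hm] := @EVT_max R (fun v => `|rho v|) (- A) (c + A) cA
  (continuous_subspaceT (fun x => continuous_comp (rc x) (@norm_continuous _ _ (rho x)))).
set B := `|rho m| in hm.
have hB : forall v, - A <= v <= c + A -> `|rho v| <= B.
  by move=> v hv; apply: hm; rewrite in_itv /=.
have B0 : 0 <= B by exact: normr_ge0.
exists (c + 8 * B ^+ 2 * c / e) => T0 hT0 tau /andP [tau0 tauA].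
have q0 : 0 <= 8 * B ^+ 2 * c / e.
  by apply: divr_ge0; [apply: mulr_ge0; [apply: mulr_ge0 => //; exact: sqr_ge0 | exact: ltW] | exact: ltW].
have cT : c < T0 by lra.
have T0p : 0 < T0 by lra.
pose F u := (T0 - u) * (rho u ^+ 2 + rho (u + tau) * rho (u - tau)).
have Fc : continuous F by exact: cont_F.
have I1 : Rintegral mu `[0, c] F <= (T0 * (2 * B ^+ 2)) * (c - 0).
  apply: int_ub => //; first exact: ltW.
  move=> u /andP [u0 uc].
  have hg : rho u ^+ 2 + rho (u + tau) * rho (u - tau) <= 2 * B ^+ 2.
    by apply: g_ub; apply: hB; apply/andP; split; lra.
  have hg2 : 0 <= 2 * B ^+ 2 by apply: mulr_ge0 => //; exact: sqr_ge0.
  rewrite /F; apply: le_trans (ler_wpM2l _ hg) _; first lra.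
  by apply: ler_wpM2r => //; lra.
have I2 : Rintegral mu `[c, T0] F <= (T0 * (2 * eta ^+ 2)) * (T0 - c).
  apply: int_ub => //; first exact: ltW.
  move=> u /andP [u0 uc].
  have hg : rho u ^+ 2 + rho (u + tau) * rho (u - tau) <= 2 * eta ^+ 2.
    have nM := ler_norm M.
    by apply: g_ub; apply: hE; rewrite /c in u0; lra.
  have hg2 : 0 <= 2 * eta ^+ 2 by apply: mulr_ge0 => //; exact: sqr_ge0.
  rewrite /F; apply: le_trans (ler_wpM2l _ hg) _; first lra.
  by apply: ler_wpM2r => //; lra.
have Isplit : Rintegral mu `[0, T0] F = Rintegral mu `[0, c] F + Rintegral mu `[c, T0] F.
  rewrite -(Phi_diff F c T0 Fc (ltW c0) (ltW cT)); ring.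
rewrite /psi -/F Isplit.
set I := Rintegral mu `[0, c] F + Rintegral mu `[c, T0] F.
have hI : I <= 2 * T0 * B ^+ 2 * c + 2 * T0 ^+ 2 * eta ^+ 2.
  rewrite /I; rewrite subr0 in I1.
  have : T0 * (2 * eta ^+ 2) * (T0 - c) <= 2 * T0 ^+ 2 * eta ^+ 2.
    rewrite expr2; have := sqr_ge0 eta; rewrite expr2 => he. nra.
  rewrite expr2 => h2; rewrite !expr2 in I1 I2 h2 *; lra.
have h8 : 8 * B ^+ 2 * c < e * T0.
  by rewrite mulrC -ltr_pdivrMl //; lra.
have h8' : 8 * B ^+ 2 * c * T0 <= e * T0 * T0.
  by apply: ler_wpM2r; [exact: ltW | exact: ltW].
have heta : eta ^+ 2 <= e / 8.
  rewrite expr2; apply: le_trans eta8; rewrite -[leRHS]mulr1.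
  by apply: ler_wpM2l => //; exact: ltW.
have heta' : eta ^+ 2 * T0 ^+ 2 <= e / 8 * T0 ^+ 2.
  by apply: ler_wpM2r => //; exact: sqr_ge0.
rewrite mulrAC ler_pdivrMr; last by rewrite exprn_gt0.
rewrite !expr2 in hI heta' h8' *.
lra.
Qed.
End final.

Theorem theorem4 (R : realType) (d : measure_display)
    (Omega : measurableType d) (P : probability Omega R)
    (X : R -> Omega -> R) (rho : R -> R) (p A : R) :
  1 <= p -> 0 < A ->
  centered_stationary_cov P X rho ->
  continuous rho ->
  rho T @[T --> +oo] --> 0 ->
  Cp rho p A T @[T --> +oo] --> 0.
Proof.
move=> p1 A0 hX rc hlim.
apply/cvgrPdist_le => e e0.
have p0 : 0 < p by lra.
pose k := e / A.
have k0 : 0 < k by exact: divr_gt0.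
pose dl := powR k (2 / p).
have dl0 : 0 < dl by apply: powR_gt0.
have [T1 HT1] := @psi_ub R rho rc A A0 hlim dl dl0.
exists (Num.max T1 0); split; first by rewrite num_real.
move=> T0; rewrite gt_max => /andP [hT1 hT0].
have hb : forall tau, 0 <= tau <= A ->
    0 <= powR (psi rho T0 tau) (p / 2) <= k.
  move=> tau htau; rewrite powR_ge0 /=.
  have ps0 := @psi_ge0 _ _ _ P X rho hX rc T0 tau hT0.
  have ps1 := HT1 T0 hT1 tau htau.
  apply: le_trans (ge0_ler_powR _ _ _ ps1) _.
  - by apply: divr_ge0; lra.
  - by rewrite nnegrE.
  - by rewrite nnegrE ltW.
  rewrite /dl -powRrM (_ : 2 / p * (p / 2) = 1) ?powRr1 //; first exact: ltW.
  by field; rewrite gt_eqF.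
have := @Rint_le_cst R A k (fun tau => powR (psi rho T0 tau) (p / 2)) (ltW A0) hb.
rewrite /Cp sub0r normrN => /andP [c0 c1].
rewrite ger0_norm //; apply: le_trans c1 _.
by rewrite /k divfK // gt_eqF.
Qed.
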